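(* Let $q=2^t$. Let $r+I\in\ker\pi_{P_1}\cap C_k(P,L)$, let $r^*\in R_P^*$ be its representative, and write $r^*=(1+x_3^{q-1})h$ with $h\in R_P^*$ not involving $x_3$. Then for every non-constant monomial $m$ of $h$, every digit of $m$ (in its 2-adic $t$-tuple) has degree exactly $1$.
   Context: Let $k=\mathbb{F}_q$, $q=2^t$, $V=k^4$ with coordinates $x_0,\dots,x_3$ relative to a symplectic basis $e_0,\dots,e_3$ of a nonsingular alternating form with $(e_0,e_3)=(e_1,e_2)=1$; $P$ the points (1-dim subspaces) and $L$ the totally isotropic 2-dim subspaces (lines). $R=k[x_0,\dots,x_3]$, $I=(x_i^q-x_i)_{i}$, $R^*$ the polynomials with each variable of degree $\le q-1$. $R_P^*$ is the $k$-span of monomials $x_0^{m_0}\cdots x_3^{m_3}$ with $0\le m_i\le q-1$ and $\sum m_i$ divisible by $q-1$; $R_P=\{f+I:f\in R_P^*\}$, identified with functions $P\to k$ by evaluation at nonzero vectors. For a line $\ell$, $\delta_\ell^*\in R_P^*$ is the polynomial representing the characteristic function of $\ell$ (value $1$ at $v\neq0$ iff $\langle v\rangle\in\ell$, else $0$), and $C_k(P,L)$ is the $k$-span of $\{\delta_\ell^*+I:\ell\in L\}$. $P_1$ is the set of points with $x_3$-coordinate nonzero and $\pi_{P_1}$ is restriction of functions to $P_1$. Any monomial $m=x_0^{m_0}x_1^{m_1}x_2^{m_2}x_3^{m_3}$ with $0\le m_i\le q-1$ has 2-adic $t$-tuple $[f_0,\dots,f_{t-1}]$, where, writing $m_i=\sum_{j=0}^{t-1}n_{i,j}2^j$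 with $n_{i,j}\in\{0,1\}$, the $j$-th digit is $f_j=x_0^{n_{0,j}}x_1^{n_{1,j}}x_2^{n_{2,j}}x_3^{n_{3,j}}$; thus $m=f_0f_1^2f_2^{4}\cdots f_{t-1}^{2^{t-1}}$. *)

(* Defs.v *)
From HB Require Import structures.
From mathcomp Require Import all_boot all_order all_algebra all_field.
Set Implicit Arguments. Unset Strict Implicit. Unset Printing Implicit Defensive.
Import GRing.Theory.
Local Open Scope ring_scope.

Definition i0 : 'I_4 := @Ordinal 4 0 isT.
Definition i1 : 'I_4 := @Ordinal 4 1 isT.
Definition i2 : 'I_4 := @Ordinal 4 2 isT.
Definition i3 : 'I_4 := @Ordinal 4 3 isT.

(* Exponent vectors of monomials of R^* : each exponent in {0,..,q-1}, q = #|F|. *)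
Notation mon F := {ffun 'I_4 -> 'I_#|F|}.
(* Elements of R^* : reduced polynomials, given by their coefficient functions. *)
Notation rpoly F := {ffun mon F -> F}.

Definition peval (F : finFieldType) (p : rpoly F) (v : 'rV[F]_4) : F :=
  \sum_(m : mon F) p m * \prod_(i < 4) (v 0 i) ^+ (m i).

Definition inRP (F : finFieldType) (p : rpoly F) : Prop :=
  forall m : mon F, p m != 0 -> (#|F|.-1 %| \sum_(i < 4) (m i : nat))%N.

Definition no_var (F : finFieldType) (i : 'I_4) (p : rpoly F) : Prop :=
  forall m : mon F, p m != 0 -> (m i : nat) = 0%N.

Definition subexp (F : finFieldType) (m : mon F) (i : 'I_4) (e : nat) : mon F :=
  [ffun j => if j == i then insubd (m j) ((m j : nat) - e)%N else m j].

(* Coefficients of x_i^e * h (exact whenever no exponent exceeds q-1, e.g. when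
   h does not involve x_i and e <= q-1). *)
Definition mulXpow (F : finFieldType) (i : 'I_4) (e : nat) (h : rpoly F) : rpoly F :=
  [ffun m : mon F => if (e <= m i)%N then h (subexp m i e) else 0].

Definition mul_1_plus_x3 (F : finFieldType) (h : rpoly F) : rpoly F :=
  [ffun m : mon F => h m + mulXpow i3 #|F|.-1 h m].

Definition symp (F : finFieldType) (x y : 'rV[F]_4) : F :=
  x 0 i0 * y 0 i3 - x 0 i3 * y 0 i0 + x 0 i1 * y 0 i2 - x 0 i2 * y 0 i1.

(* A 2x4 matrix whose row space is a line of L: rank 2 and totally isotropic.
   The line is the row space of A; v lies in it iff (v <= A)%MS. *)
Definition is_line (F : finFieldType) (A : 'M[F]_(2, 4)) : bool :=
  (\rank A == 2%N) && [forall i, [forall j, symp (row i A) (row j A) == 0]].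

(* 2-adic digits: n_{i,j} is the j-th binary digit of the exponent m_i; the
   j-th digit f_j = prod_i x_i^{n_{i,j}} has degree sum_i n_{i,j}. *)
Definition digit_deg (F : finFieldType) (m : mon F) (j : nat) : nat :=
  \sum_(i < 4) (((m i : nat) %/ 2 ^ j) %% 2)%N.

(* Main.v *)
Require Import Defs.
From HB Require Import structures.
From Stdlib Require Import Lia.
From mathcomp Require Import all_boot all_order all_algebra all_field.
Set Implicit Arguments. Unset Strict Implicit. Unset Printing Implicit Defensive.
Import GRing.Theory.
Local Open Scope ring_scope.

Lemma char2_of (F : finFieldType) (t : nat) (hq : #|F| = (2 ^ t)%N) :
  2 \in [pchar F].
Proof. exact: (card_finPcharP hq). Qed.

Lemma two0 (F : finFieldType) (t : nat) (hq : #|F| = (2 ^ t)%N) : 2%:R = 0 :> F.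
Proof. by have /andP[_ /eqP] := char2_of hq. Qed.

Lemma t_gt0 (F : finFieldType) (t : nat) (hq : #|F| = (2 ^ t)%N) : (0 < t)%N.
Proof.
case: t hq => // hq; have := finNzRing_gt1 F; by rewrite hq.
Qed.

Lemma natr_card (F : finFieldType) (t : nat) (hq : #|F| = (2 ^ t)%N) :
  (#|F|)%:R = 0 :> F.
Proof.
by rewrite hq natrX (two0 hq) expr0n; have := t_gt0 hq; case: t {hq}.
Qed.

Lemma natr_N (F : finFieldType) (t : nat) (hq : #|F| = (2 ^ t)%N) :
  (#|F|.-1)%:R = -1 :> F.
Proof.
apply/eqP; rewrite -addr_eq0 natr1 prednK ?(natr_card hq) //.
exact: ltn_trans (finNzRing_gt1 F).
Qed.

Lemma expN1 (F : finFieldType) (y : F) : y != 0 -> y ^+ #|F|.-1 = 1.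
Proof.
move=> ny; apply: (mulIf ny); rewrite mul1r -exprSr prednK ?expf_card //.
exact: ltn_trans (finNzRing_gt1 F).
Qed.

Lemma exists_nonroot (F : finFieldType) (r : nat) :
  (0 < r)%N -> (r < #|F|.-1)%N -> exists a : F, (a != 0) && (a ^+ r != 1).
Proof.
move=> r0 rN.
case: (boolP [forall a : F, (a != 0) ==> (a ^+ r == 1)]); last first.
  by rewrite negb_forall => /existsP[a]; rewrite negb_imply => ?; exists a.
move/forallP=> H; exfalso.
have pnz : ('X^r - 1%:P : {poly F}) != 0.
  by rewrite -size_poly_eq0 size_XnsubC.
have := @max_poly_roots F _ (enum (predC1 0)) pnz.
rewrite size_XnsubC // enum_uniq -cardE cardC1 ltnS leqNgt rN.
move=> H2; suff: false by []; apply: H2 => //; apply/allP => x; rewrite mem_enum /= => xn.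
by rewrite /root !hornerE; move: (H x) => /implyP /(_ xn) /eqP ->; rewrite subrr.
Qed.

Lemma psum (F : finFieldType) (t : nat) (hq : #|F| = (2 ^ t)%N) (n : nat) :
  \sum_(y : F) y ^+ n = if (0 < n)%N && (#|F|.-1 %| n)%N then -1 else 0.
Proof.
have N0 : (0 < #|F|.-1)%N by rewrite -ltnS prednK ?finNzRing_gt1 // ltnW ?finNzRing_gt1.
case: n => [|n] /=.
  by under eq_bigr do rewrite expr0; rewrite sumr_const (natr_card hq).
rewrite (bigD1 0) //= expr0n add0r.
case: ifP => Hd.
  rewrite (eq_bigr (fun _ => 1)); last first.
    move=> y ny; case/dvdnP: Hd => k ->; by rewrite mulnC exprM expN1 // expr1n.
  by rewrite sumr_const cardC1 (natr_N hq).
set r := (n.+1 %% #|F|.-1)%N.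
have r0 : (0 < r)%N by rewrite lt0n; apply/negP => /eqP Hr; move: Hd; rewrite /dvdn -/r Hr eqxx.
have rN : (r < #|F|.-1)%N by rewrite ltn_pmod.
have [a /andP[an ar]] := exists_nonroot r0 rN.
have ean : a ^+ n.+1 = a ^+ r.
  by rewrite {1}(divn_eq n.+1 #|F|.-1) exprD mulnC exprM expN1 // expr1n mul1r.
set S := \sum_(i | _) _.
have: S = a ^+ n.+1 * S.
  rewrite /S mulr_sumr (reindex_inj (mulfI an)) /=.
  apply: eq_big => [y|y _]; first by rewrite mulf_eq0 (negbTE an).
  by rewrite exprMn.
move/eqP; rewrite -subr_eq0 -{1}(mul1r S) -mulrBl mulf_eq0 subr_eq0 ean eq_sym (negbTE ar) /=.
by move/eqP.
Qed.
Lemma sum_row_prod (F : finFieldType) (n : nat) (G : 'I_n -> F -> F) :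
  \sum_(v : 'rV[F]_n) \prod_(i < n) G i (v 0 i) = \prod_(i < n) \sum_(y : F) G i y.
Proof.
rewrite bigA_distr_bigA /=.
rewrite (reindex (fun f : {ffun 'I_n -> F} => \row_i f i)) /=; last first.
  exists (fun v : 'rV[F]_n => [ffun i => v 0 i]) => [f _|v _].
    by apply/ffunP => i; rewrite ffunE mxE.
  by apply/rowP => i; rewrite mxE ffunE.
by apply: eq_bigr => f _; apply: eq_bigr => i _; rewrite mxE.
Qed.
Definition gg (F : finFieldType) (k : nat) (y : F) : F :=
  (k == 0)%N%:R - y ^+ (#|F|.-1 - k).

Lemma Npos (F : finFieldType) : (0 < #|F|.-1)%N.
Proof. by rewrite -ltnS prednK ?finNzRing_gt1 // ltnW ?finNzRing_gt1. Qed.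

Lemma dvd_window N n : (0 < n)%N -> (n < N.*2)%N -> (N %| n)%N -> n = N.
Proof.
move=> n0 n2 /dvdnP[c Hc]; subst n.
case: c n0 n2 => [|[|c]] //=; first by rewrite mul1n.
by move=> _; rewrite -mul2n ltn_mul2r => /andP[_].
Qed.

Lemma cond_eq N a k : (a <= N)%N -> (k < N)%N ->
  ((0 < a + (N - k.+1))%N && (N %| a + (N - k.+1))%N) = (a == k.+1).
Proof.
move=> aN kN; apply/idP/eqP => [/andP[H1 H2]|->]; last first.
  by rewrite subnKC // dvdnn (leq_ltn_trans _ kN).
have e : (a + (N - k.+1))%N = N.
  apply: dvd_window => //.
  rewrite -addnn; apply: leq_ltn_trans (_ : (N + (N - k.+1) < N + N)%N).
    by rewrite leq_add2r.
  by rewrite ltn_add2l; rewrite -subn_gt0 subKn // ltnW.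
by apply/eqP; rewrite -(eqn_add2r (N - k.+1)) e subnKC.
Qed.

Lemma gsum (F : finFieldType) (t : nat) (hq : #|F| = (2 ^ t)%N) (a k : nat) :
  (a < #|F|)%N -> (k < #|F|)%N ->
  \sum_(y : F) y ^+ a * gg k y = (a == k)%:R.
Proof.
move=> aq kq; have N0 := Npos F.
have aN : (a <= #|F|.-1)%N by rewrite -ltnS prednK ?(ltnW (finNzRing_gt1 F)).
have kN : (k <= #|F|.-1)%N by rewrite -ltnS prednK ?(ltnW (finNzRing_gt1 F)).
rewrite /gg.
under eq_bigr do rewrite mulrBr -exprD.
rewrite sumrB -mulr_suml !(psum hq).
case: k kq kN => [|k] kq kN.
  rewrite subn0 mulr1 addn_gt0 N0 orbT (dvdn_addl _ (dvdnn _)) /=.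
  case: a aq aN => [|a] aq aN /=; first by rewrite dvdn0 sub0r opprK.
  by rewrite subrr.
rewrite mulr0 sub0r cond_eq //.
by case: eqP => _; rewrite ?opprK ?oppr0.
Qed.

Lemma coef_extract (F : finFieldType) (t : nat) (hq : #|F| = (2 ^ t)%N)
  (p : rpoly F) (m : mon F) :
  p m = \sum_(v : 'rV[F]_4) peval p v * \prod_(i < 4) gg (m i) (v 0 i).
Proof.
rewrite /peval; under eq_bigr do rewrite mulr_suml.
rewrite exchange_big /=.
under eq_bigr => m' _.
  under eq_bigr do rewrite -mulrA -big_split /=.
  rewrite -mulr_sumr (sum_row_prod (fun i y => y ^+ m' i * gg (m i) y)).

  under eq_bigr do rewrite (gsum hq (ltn_ord _) (ltn_ord _)).
  over.
rewrite (bigD1 m) //=.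
rewrite [X in p m * X]big1 ?mulr1; last by move=> i _; rewrite eqxx.
rewrite big1 ?addr0 //.
move=> m' nm; rewrite (_ : \prod_(i < 4) _ = 0) ?mulr0 //.
have [i ni] : exists i, m' i != m i.
  apply/existsP; rewrite -negb_forall; apply: contra nm => /forallP H.
  by apply/eqP/ffunP => i; apply/eqP/H.
by rewrite (bigD1 i) //= (negbTE (_ : (m' i : nat) != m i)) ?mul0r.
Qed.
Definition bit (x j : nat) : bool := odd (x %/ 2 ^ j).

Lemma bitS x j : bit x j.+1 = bit x./2 j.
Proof. by rewrite /bit expnS divnMA divn2. Qed.

Lemma bit0 x : bit x 0 = odd x.
Proof. by rewrite /bit expn0 divn1. Qed.

Lemma binexp t x : (x < 2 ^ t)%N -> x = (\sum_(j < t) bit x j * 2 ^ j)%N.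
Proof.
elim: t x => [|t IH] x.
  by rewrite expn0 ltnS leqn0 => /eqP ->; rewrite big_ord0.
move=> xt; rewrite big_ord_recl /= bit0 expn0 muln1.
have hx : (x./2 < 2 ^ t)%N by rewrite -ltn_double -!muln2 -expnSr (leq_ltn_trans _ xt) // -[X in (_ <= X)%N](odd_double_half x) -!muln2 leq_addl.
under eq_bigr do rewrite /bump /= add1n bitS expnS mulnCA.
by rewrite -big_distrr /= -(IH _ hx) mul2n odd_double_half.
Qed.

Lemma pow_bits (F : finFieldType) t (y : F) x : (x < 2 ^ t)%N ->
  y ^+ x = \prod_(j < t) (if bit x j then y ^+ (2 ^ j) else 1).
Proof.
move=> xt; rewrite {1}(binexp xt) -prodrXr; apply: eq_bigr => j _.
by case: (bit x j); rewrite ?mul1n ?mul0n.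
Qed.

Lemma frob2 (F : finFieldType) t (hq : #|F| = (2 ^ t)%N) j (x y : F) :
  (x + y) ^+ (2 ^ j) = x ^+ (2 ^ j) + y ^+ (2 ^ j).
Proof.
elim: j => [|j IH]; first by rewrite !expr1.
by rewrite expnSr !exprM IH sqrrD -mulr_natr (two0 hq) mulr0 addr0.

Qed.

Definition alpha t (f : {ffun 'I_4 * 'I_t -> bool}) : nat :=
  \sum_(p : 'I_4 * 'I_t) (if f p then 2 ^ p.2 else 0).
Definition beta t (e : 'I_4 -> nat) (f : {ffun 'I_4 * 'I_t -> bool}) : nat :=
  \sum_(p : 'I_4 * 'I_t) (if bit (e p.1) p.2 && ~~ f p then 2 ^ p.2 else 0).
Definition valid t (e : 'I_4 -> nat) (f : {ffun 'I_4 * 'I_t -> bool}) : bool :=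
  [forall p, f p ==> bit (e p.1) p.2].

Definition GG (F : finFieldType) t (e : 'I_4 -> nat) (u w : 'I_4 -> F) (s r : F)
  (p : 'I_4 * 'I_t) (c : bool) : F :=
  if bit (e p.1) p.2 then (if c then (s * u p.1) ^+ (2 ^ p.2) else (r * w p.1) ^+ (2 ^ p.2))
  else (if c then 0 else 1).

Lemma expand (F : finFieldType) t (hq : #|F| = (2 ^ t)%N) (u w : 'I_4 -> F)
  (e : 'I_4 -> nat) (he : forall i, (e i < 2 ^ t)%N) (s r : F) :
  \prod_(i < 4) (s * u i + r * w i) ^+ e i =
  \sum_(f : {ffun 'I_4 * 'I_t -> bool}) \prod_(p : 'I_4 * 'I_t) GG e u w s r p (f p).
Proof.
rewrite -bigA_distr_bigA /=.
transitivity (\prod_(i < 4) \prod_(j < t) \sum_(c : bool) GG e u w s r (i, j) c); last first.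
  by rewrite pair_bigA; apply: eq_bigr => [[i j]] _.
apply: eq_bigr => i _; rewrite (pow_bits _ (he i)); apply: eq_bigr => j _.
rewrite big_bool /GG /=; case: bit; by rewrite ?addr0 ?add0r // (frob2 hq).
Qed.

Lemma KL (F : finFieldType) t (hq : #|F| = (2 ^ t)%N) (u w : 'I_4 -> F)
  (e : 'I_4 -> nat) (he : forall i, (e i < 2 ^ t)%N) :
  (forall f : {ffun 'I_4 * 'I_t -> bool}, valid e f ->
     (\sum_(y : F) y ^+ alpha f) * (\sum_(y : F) y ^+ beta e f) = 0) ->
  \sum_(x : 'rV[F]_2) \prod_(i < 4) (x 0 0 * u i + x 0 1 * w i) ^+ e i = 0.
Proof.
move=> H.
under eq_bigr do rewrite (expand hq u w he).
rewrite exchange_big /=; apply: big1 => f _.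
case: (boolP (valid e f)) => vf; last first.
  apply: big1 => x _.
  move: vf; rewrite /valid negb_forall => /existsP[p]; rewrite negb_imply => /andP[fp bp].
  by rewrite (bigD1 p) //= /GG (negbTE bp) fp mul0r.
pose K := \prod_(p : 'I_4 * 'I_t) (if bit (e p.1) p.2 then
   (if f p then u p.1 ^+ (2 ^ p.2) else w p.1 ^+ (2 ^ p.2)) else 1).
transitivity (\sum_(x : 'rV[F]_2) (x 0 0 ^+ alpha f * x 0 1 ^+ beta e f) * K).
  apply: eq_bigr => x _.
  rewrite /alpha /beta -!prodrXr /K -!big_split /=.
  apply: eq_bigr => p _; rewrite /GG.
  move/forallP: vf => /(_ p).
  by case: (f p); case: bit => //= _; rewrite ?mulr1 ?mul1r ?exprMn.
rewrite -mulr_suml.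
have -> : \sum_(x : 'rV[F]_2) x 0 0 ^+ alpha f * x 0 1 ^+ beta e f =
  \sum_(x : 'rV[F]_2) \prod_(k < 2) (x 0 k) ^+ (if k == 0 then alpha f else beta e f).
  apply: eq_bigr => x _; rewrite !big_ord_recl big_ord0 mulr1 /=.
  by congr (x 0 _ ^+ _ * x 0 _ ^+ _); apply: val_inj.
rewrite (@sum_row_prod F 2 (fun k y => y ^+ (if k == 0 then alpha f else beta e f))).
rewrite big_ord_recl big_ord_recl big_ord0 mulr1 /=.
by rewrite H // mul0r.
Qed.
Local Open Scope nat_scope.

Lemma odd_pow2m1 t : odd (2 ^ t.+1 - 1).
Proof. by rewrite oddB ?expn_gt0 // oddX. Qed.

Lemma sum_shift t (A : 'I_t.+1 -> nat) :
  \sum_(j < t.+1) A j * 2 ^ j = A ord0 + 2 * \sum_(j < t) A (lift ord0 j) * 2 ^ j.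
Proof.
rewrite big_ord_recl expn0 muln1 big_distrr /=; congr (_ + _).
by apply: eq_bigr => j _; rewrite /bump /= add1n expnS mulnCA.
Qed.

Lemma DL t (A C D : 'I_t -> nat) :
  (forall j, A j + C j + D j = 3) ->
  \sum_(j < t) A j * 2 ^ j = 2 ^ t - 1 ->
  \sum_(j < t) C j * 2 ^ j = 2 ^ t - 1 ->
  \sum_(j < t) D j * 2 ^ j = 2 ^ t - 1 ->
  forall j, D j = 1.
Proof.
elim: t A C D => [|t IH] A C D H3 HA HC HD j; first by case: j.
rewrite !sum_shift in HA HC HD.
have oddX : forall X Y, X + 2 * Y = 2 ^ t.+1 - 1 -> odd X.
  move=> X Y e; have := odd_pow2m1 t; rewrite -e oddD mul2n odd_double.
  by rewrite addbF.
have oA := oddX _ _ HA; have oC := oddX _ _ HC; have oD := oddX _ _ HD.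
have H0 := H3 ord0.
have [a1 [c1 d1]] : A ord0 = 1 /\ C ord0 = 1 /\ D ord0 = 1.
  move: oA oC oD H0; case: (A ord0) => [|[|[|[|a]]]] //;
  case: (C ord0) => [|[|[|[|c]]]] //; case: (D ord0) => [|[|[|[|d]]]] //;
  by rewrite ?addnS ?addSn.
have half : forall Y, 1 + 2 * Y = 2 ^ t.+1 - 1 -> Y = 2 ^ t - 1.
  move=> Y e; apply/eqP; rewrite -(eqn_pmul2l (isT : 0 < 2)) mulnBr muln1 -expnS.
  by move: e => /(congr1 (subn^~ 1)); rewrite addKn -subnDA => ->.
rewrite a1 in HA; rewrite c1 in HC; rewrite d1 in HD.
have := IH (fun j => A (lift ord0 j)) (fun j => C (lift ord0 j)) (fun j => D (lift ord0 j))
  (fun j => H3 _) (half _ HA) (half _ HC) (half _ HD).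
by case: (unliftP ord0 j) => [j' ->|->] //; apply.
Qed.
Lemma bit_compl t x j : x < 2 ^ t -> j < t -> bit (2 ^ t - 1 - x) j = ~~ bit x j.
Proof.
move=> xt jt; rewrite /bit.
set P := 2 ^ j; set Q := 2 ^ (t - j).
have P0 : 0 < P by rewrite expn_gt0.
have Q0 : 0 < Q by rewrite expn_gt0.
have eT : 2 ^ t = Q * P by rewrite -expnD subnK // ltnW.
set a := x %/ P; set r := x %% P.
have ex : x = a * P + r by rewrite /a /r -divn_eq.
have rP : r < P by rewrite ltn_mod.
have aQ : a < Q by rewrite ltn_divLR // -eT.
have key : 2 ^ t - 1 - x = (Q - 1 - a) * P + (P - 1 - r).
  have h1 : a * P + P <= Q * P by rewrite -[a * P + P]mulSnr leq_mul2r aQ orbT.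
  rewrite eT ex !mulnBl mul1n.
  move: h1 rP; set QP := Q * P; set aP := a * P.
  move=> /leP h1 /leP h2; rewrite -?plusE -?minusE.
  clearbody QP aP; rewrite -?plusE in h1; move: h1 h2; clear; intros.
lia.
rewrite key divnMDl // divn_small; last by rewrite -subnDA ltn_subrL addn_gt0 P0.
rewrite addn0 oddB; last by rewrite subn1 -ltnS prednK.
rewrite oddB // /Q oddX subn_eq0 leqNgt jt /=.
by case: (odd a).
Qed.

Lemma bit_lt t x j : x < 2 ^ t -> (bit x j * 2 ^ j) = if bit x j then 2 ^ j else 0.
Proof. by case: bit; rewrite ?mul1n ?mul0n. Qed.

Lemma sum_bits t x : x < 2 ^ t -> \sum_(j < t) (if bit x j then 2 ^ j else 0) = x.
Proof.
move=> xt; rewrite {2}(binexp xt); apply: eq_bigr => j _.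
by case: bit; rewrite ?mul1n ?mul0n.
Qed.

Lemma alpha_beta t (e : 'I_4 -> nat) (f : {ffun 'I_4 * 'I_t -> bool}) :
  (forall i, e i < 2 ^ t) -> valid e f -> alpha f + beta e f = \sum_(i < 4) e i.
Proof.
move=> he /forallP vf; rewrite /alpha /beta -big_split /=.
rewrite (eq_bigr (fun p : 'I_4 * 'I_t => if bit (e p.1) p.2 then 2 ^ p.2 else 0)); last first.
  by move=> p _; have := vf p; case: (f p); case: bit => //= _; rewrite ?addn0.
transitivity (\sum_(i < 4) \sum_(j < t) if bit (e i) j then 2 ^ j else 0).
  by rewrite pair_bigA.
by apply: eq_bigr => i _; rewrite sum_bits.
Qed.

Lemma bit_0 j : bit 0 j = false.
Proof. by rewrite /bit div0n. Qed.

Lemma wsum t (F : 'I_4 -> 'I_t -> bool) :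
  \sum_(p : 'I_4 * 'I_t) (if F p.1 p.2 then 2 ^ p.2 else 0) =
  \sum_(j < t) (\sum_(i < 4) F i j) * 2 ^ j.
Proof.
rewrite -(pair_bigA _ (fun (i : 'I_4) (j : 'I_t) => if F i j then 2 ^ j else 0)) /=.
rewrite exchange_big; apply: eq_bigr => j _; rewrite big_distrl /=.
by apply: eq_bigr => i _; case: (F i j); rewrite ?mul1n ?mul0n.
Qed.

Lemma comb t (m : 'I_4 -> nat) (e : 'I_4 -> nat) (f : {ffun 'I_4 * 'I_t -> bool}) :
  (forall i, m i < 2 ^ t) -> m i3 = 0 ->
  0 < \sum_(i < 4) m i -> (2 ^ t - 1) %| \sum_(i < 4) m i ->
  (forall i, e i <= 2 ^ t - 1 - (if i == i3 then 2 ^ t - 1 else m i)) ->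
  valid e f ->
  0 < alpha f -> (2 ^ t - 1) %| alpha f -> 0 < beta e f -> (2 ^ t - 1) %| beta e f ->
  forall j : 'I_t, \sum_(i < 4) bit (m i) j = 1.
Proof.
move=> mt m3 M0 MN he vf a0 aN b0 bN.
set N := 2 ^ t - 1 in MN he aN bN *.
set mm := fun i : 'I_4 => if i == i3 then N else m i.
have mN : forall i, m i <= N by move=> i; rewrite /N subn1 -ltnS prednK ?expn_gt0.
have mmN : forall i, mm i <= N by move=> i; rewrite /mm; case: ifP.
have NT : N < 2 ^ t by rewrite /N subn1 prednK ?expn_gt0.
have heT : forall i, e i < 2 ^ t.
  by move=> i; apply: leq_ltn_trans NT; apply: leq_trans (he i) _; apply: leq_subr.
have ab := alpha_beta heT vf.
have aN' : N <= alpha f by apply: dvdn_leq.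
have bN' : N <= beta e f by apply: dvdn_leq.
have MN' : N <= \sum_(i < 4) m i by apply: dvdn_leq.
have summm : \sum_(i < 4) mm i = N + \sum_(i < 4) m i.
  rewrite (bigD1 i3) //= [in RHS](bigD1 i3) //= m3 add0n /mm eqxx; congr (_ + _).
  by apply: eq_bigr => i ni; rewrite (negbTE ni).
have sumc : \sum_(i < 4) (N - mm i) + \sum_(i < 4) mm i = 4 * N.
  rewrite -big_split /= (eq_bigr (fun _ => N)); last by move=> i _; rewrite subnK.
  by rewrite sum_nat_const card_ord.
have sume : \sum_(i < 4) e i <= \sum_(i < 4) (N - mm i) by apply: leq_sum => i _; exact: he i.
move: ab aN' bN' MN' summm sumc sume.
set E := \sum_(i < 4) e i; set Cm := \sum_(i < 4) (N - mm i).
set SM := \sum_(i < 4) mm i; set M := \sum_(i < 4) m i.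
set al := alpha f; set be := beta e f.
move=> ab aN' bN' MN' summm sumc sume.
have [eE [eal [ebe eM]]] : E = Cm /\ al = N /\ be = N /\ M = N.
  move: ab aN' bN' MN' summm sumc sume; clearbody E Cm SM M al be N.
  move=> /eqP ab /leP aN' /leP bN' /leP MN' /eqP summm /eqP sumc /leP sume.
  move: ab summm sumc; rewrite -?plusE -?multE => /eqP ab /eqP summm /eqP sumc.
  lia.
have ee : forall i, e i = N - mm i.
  move=> i; apply/eqP; rewrite eqn_leq he /=.
  have : \sum_(i < 4) (N - mm i - e i) == 0.
    rewrite sumnB; last by move=> k _; exact: he k.
    by rewrite -/E -/Cm eE subnn.
  rewrite sum_nat_eq0 => /forallP /(_ i) /=; rewrite subn_eq0 => ->. done.
have Ndef : 2 ^ t - 1 = N by [].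
move=> j.
apply: (@DL t (fun k => \sum_(i < 4) f (i, k))
  (fun k => \sum_(i < 4) (bit (e i) k && ~~ f (i, k)))
  (fun k => \sum_(i < 4) bit (m i) k)); rewrite ?Ndef.
- move=> k; rewrite -!big_split /=.
  transitivity (\sum_(i < 4) (i != i3 : nat)); last by rewrite !big_ord_recr big_ord0.
  apply: eq_bigr => i _; move/forallP: vf => /(_ (i, k)) /=.
  case: (eqVneq i i3) => [->|ni].
    rewrite ee /mm eqxx subnn m3 bit_0 /=.
    by case: (f (i3, k)).
  rewrite ee /mm (negbTE ni) (bit_compl (mt i) (ltn_ord k)).
  by case: (f (i, k)); case: bit.
- rewrite -eal /al /alpha -(wsum (fun i k => f (i, k))).
  by apply: eq_bigr => [[i k]] _.
- rewrite -ebe /be /beta -(wsum (fun i k => bit (e i) k && ~~ f (i, k))).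
  by apply: eq_bigr => [[i k]] _.
- rewrite -eM /M -(wsum (fun i k => bit (m i) k)).
  rewrite -(pair_bigA _ (fun (i : 'I_4) (k : 'I_t) => if bit (m i) k then 2 ^ k else 0)) /=.
  by apply: eq_bigr => i _; rewrite sum_bits.
Qed.

Local Open Scope ring_scope.
Lemma mulmx_coord (F : finFieldType) (x : 'rV[F]_2) (A : 'M[F]_(2, 4)) i :
  (x *m A) 0 i = x 0 0 * A 0 i + x 0 1 * A 1 i.
Proof.
rewrite mxE !big_ord_recl big_ord0 addr0 /=.
by congr (x 0 _ * A _ i + x 0 _ * A _ i); apply: val_inj.
Qed.

Lemma VAN (F : finFieldType) (t : nat) (hq : #|F| = (2 ^ t)%N) (m : 'I_4 -> nat)
  (A : 'M[F]_(2, 4)) :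
  (forall i, m i < #|F|)%N -> m i3 = 0%N ->
  (0 < \sum_(i < 4) m i)%N -> (#|F|.-1 %| \sum_(i < 4) m i)%N ->
  ~ (forall j : 'I_t, (\sum_(i < 4) bit (m i) j)%N = 1%N) ->
  \sum_(x : 'rV[F]_2) \prod_(i < 4)
     gg (if i == i3 then #|F|.-1 else m i) ((x *m A) 0 i) = 0.
Proof.
move=> mt m3 M0 MN bad.
have Ndef : #|F|.-1 = (2 ^ t - 1)%N by rewrite hq subn1.
set mm := fun i : 'I_4 => if i == i3 then #|F|.-1 else m i.
pose c i := (mm i == 0)%N%:R : F.
pose k i := (#|F|.-1 - mm i)%N.
under eq_bigr => x _.
  rewrite (eq_bigr (fun i => \sum_(b : bool) (if b then c i else - ((x *m A) 0 i) ^+ k i))); last first.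
    by move=> i _; rewrite big_bool /gg.
  rewrite bigA_distr_bigA /=.
  over.
rewrite exchange_big /=; apply: big1 => s _.
pose e i := if s i then 0%N else k i.
transitivity (\sum_(x : 'rV[F]_2) (\prod_(i < 4) (if s i then c i else -1)) *
    \prod_(i < 4) (x 0 0 * A 0 i + x 0 1 * A 1 i) ^+ e i).
  apply: eq_bigr => x _; rewrite -big_split /=; apply: eq_bigr => i _.
  by rewrite /e mulmx_coord; case: (s i); rewrite ?expr0 ?mulr1 ?mulN1r.
rewrite -mulr_sumr (KL hq) ?mulr0 //.
  move=> i; rewrite /e -hq; case: (s i); first by rewrite (ltn_trans _ (finNzRing_gt1 F)).
  rewrite /k; apply: (leq_ltn_trans (leq_subr _ _)).
  by rewrite ltn_predL (ltn_trans _ (finNzRing_gt1 F)).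
move=> f vf; rewrite !(psum hq).
case: ifP => Ha; last by rewrite mul0r.
case: ifP => Hb; last by rewrite mulr0.
exfalso; apply: bad.
case/andP: Ha => a0 aN; case/andP: Hb => b0 bN.
rewrite Ndef in aN bN MN.
apply: (comb (e := e) (f := f)) => //.
- by move=> i; rewrite -hq.
- move=> i; rewrite /e /k /mm Ndef; case: (s i) => //.
Qed.

Lemma sum_subspace (F : finFieldType) (A : 'M[F]_(2, 4)) (G : 'rV[F]_4 -> F) :
  row_free A ->
  \sum_(v : 'rV[F]_4) (if (v <= A)%MS then 1 else 0) * G v =
  \sum_(x : 'rV[F]_2) G (x *m A).
Proof.
move=> rf.
rewrite (eq_bigr (fun v => if (v <= A)%MS then G v else 0)); last first.
  by move=> v _; case: ifP; rewrite ?mul1r ?mul0r.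
rewrite -big_mkcond /=.
have inj : {in [set: 'rV[F]_2] &, injective (fun x : 'rV[F]_2 => x *m A)}.
  by move=> x y _ _; apply: row_free_inj.
transitivity (\sum_(x in [set: 'rV[F]_2]) G (x *m A)); last by apply: eq_bigl => x; rewrite inE.
rewrite -(big_imset _ inj) /=.
apply: eq_bigl => v; apply/idP/imsetP => [/submxP[x ->]|[x _ ->]].
  by exists x; rewrite ?inE.
exact: submxMl.
Qed.

Unset Implicit Arguments.

Theorem lemma10
  (F : finFieldType) (t : nat) (hq : #|F| = (2 ^ t)%N)
  (delta : 'M[F]_(2, 4) -> rpoly F)
  (hdelta : forall A : 'M[F]_(2, 4), is_line A ->
     forall v : 'rV[F]_4, peval (delta A) v = (if (v <= A)%MS then 1 else 0))
  (r : rpoly F) (hrP : inRP r)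
  (hrC : exists c : 'M[F]_(2, 4) -> F,
     forall m : mon F, r m = \sum_(A : 'M[F]_(2, 4) | is_line A) c A * delta A m)
  (hrker : forall v : 'rV[F]_4, v 0 i3 != 0 -> peval r v = 0)
  (h : rpoly F) (hhP : inRP h) (hh3 : no_var i3 h)
  (hrh : r = mul_1_plus_x3 h) :
  forall m : mon F, h m != 0 -> (exists i, (m i : nat) != 0%N) ->
    forall j : nat, (j < t)%N -> digit_deg m j = 1%N.
Proof.
move=> m hm [i0' hi0] j jt.
have N0 := Npos F.
have m3 : (m i3 : nat) = 0%N by apply: hh3.
have hrm : r m = h m.
  rewrite hrh /mul_1_plus_x3 /mulXpow !ffunE m3.
  by rewrite leqNgt N0 addr0.
have MN := hhP m hm.
have M0 : (0 < \sum_(i < 4) (m i : nat))%N.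
  by rewrite (bigD1 i0') //= addn_gt0 lt0n hi0.
case: (boolP [forall j : 'I_t, (\sum_(i < 4) bit (m i) j)%N == 1%N]) => [/forallP H|H].
  apply: etrans (eqP (H (Ordinal jt))); rewrite /digit_deg.
  by apply: eq_bigr => i _; rewrite modn2.
exfalso; move: hm; rewrite -hrm (coef_extract hq) => /eqP; apply.
set mm := fun i : 'I_4 => if i == i3 then #|F|.-1 else (m i : nat).
transitivity (- \sum_(v : 'rV[F]_4) peval r v * \prod_(i < 4) gg (mm i) (v 0 i)).
  rewrite -sumrN; apply: eq_bigr => v _.
  case: (eqVneq (v 0 i3) 0) => v3; last by rewrite hrker // !mul0r oppr0.
  rewrite -mulrN; congr (_ * _).
  rewrite (bigD1 i3) //= [in RHS](bigD1 i3) //= /mm eqxx m3 v3.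
  rewrite /gg !subn0 subnn expr0 eqxx expr0n /=.
  rewrite eqn0Ngt N0 /=.
  rewrite subr0 sub0r mulNr !mul1r opprK; apply: eq_bigr => i ni.
  by rewrite (negbTE ni).
case: hrC => c hc.
have pr : forall v, peval r v = \sum_(A : 'M[F]_(2, 4) | is_line A) c A * peval (delta A) v.
  move=> v; rewrite /peval; under eq_bigr do rewrite hc mulr_suml.
  rewrite exchange_big /=; apply: eq_bigr => A _.
  by rewrite mulr_sumr; apply: eq_bigr => m' _; rewrite mulrA.
under eq_bigr do rewrite pr mulr_suml.
rewrite exchange_big /= big1 ?oppr0 // => A lA.
under eq_bigr do rewrite -mulrA (hdelta A lA).
rewrite -mulr_sumr sum_subspace; last by case/andP: lA.
rewrite (VAN hq (m := fun i => (m i : nat))) ?mulr0 //.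
move=> H2; move/negP: H; apply; apply/forallP => k; apply/eqP; exact: H2.
Qed.
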